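(* Let $R$ be a $*$-ring. The following are equivalent: (1) $R$ is strongly $\pi$-$*$-regular. (2) $R$ is $\pi$-regular and every idempotent of $R$ is a projection. (3) For every $a\in R$ there exist $n\geq 1$ and a projection $p\in R$ such that $a^nR=pR$, and $R$ is abelian. (4) For every $a\in R$ there exists $n\geq 1$ such that $a^n$ is strongly $*$-regular. (5) For every $a\in R$ there exist a projection $p$ and a unit $u$ of $R$ such that $a=p+u$ and $ap$ is nilpotent; and $v^{-1}qv$ is a projection for every unit $v\in U(R)$ and every projection $q$ of $R$.
   Context: Rings are associative with identity. A $*$-ring is a ring $R$ with a map $*:R\to R$ satisfying $(x+y)^*=x^*+y^*$, $(xy)^*=y^*x^*$, $(x^* )^*=x$. A projection is an element $p$ with $p^2=p=p^*$. $U(R)$ denotes the units of $R$. $R$ is abelian if all idempotents are central. $R$ is $\pi$-regular if for each $a\in R$ there exist $n\ge1$ and $b\in R$ with $a^n=a^nba^n$. An element $a$ is strongly $*$-regular if $a=pu=up$ for some projection $p$ and unit $u$. An element $a\in R$ is strongly $\pi$-$*$-regular if there exist a projection $e$, a unit $u$ and an integer $m\geq1$ such that $a^m=eu$ and $a,e,u$ pairwise commute; $R$ is strongly $\pi$-$*$-regular if every element is. *)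

(* Defs.v *)
From mathcomp Require Import all_boot all_algebra.
Set Implicit Arguments. Unset Strict Implicit. Unset Printing Implicit Defensive.
Import GRing.Theory.
Local Open Scope ring_scope.

(* Rings are associative with identity; the zero ring is not excluded,
   so we work over a pzRingType. *)

Definition is_star_ring (R : pzRingType) (star : R -> R) : Prop :=
  [/\ forall x y, star (x + y) = star x + star y,
      forall x y, star (x * y) = star y * star x &
      forall x, star (star x) = x].

Definition projection (R : pzRingType) (star : R -> R) (p : R) : Prop :=
  p * p = p /\ star p = p.

Definition is_unit (R : pzRingType) (u : R) : Prop :=
  exists v, u * v = 1 /\ v * u = 1.

Definition idempotent_elt (R : pzRingType) (e : R) : Prop := e * e = e.

Definition abelian_ring (R : pzRingType) : Prop :=
  forall e : R, idempotent_elt e -> forall x, e * x = x * e.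

Definition pi_regular (R : pzRingType) : Prop :=
  forall a : R, exists n : nat, (1 <= n)%N /\ exists b, a ^+ n = a ^+ n * b * a ^+ n.

Definition strongly_star_regular (R : pzRingType) (star : R -> R) (a : R) : Prop :=
  exists p u, [/\ projection star p, is_unit u, a = p * u & a = u * p].

Definition strongly_pi_star_regular_elt (R : pzRingType) (star : R -> R) (a : R) : Prop :=
  exists e u (m : nat), [/\ (1 <= m)%N, projection star e, is_unit u, a ^+ m = e * u &
    [/\ a * e = e * a, a * u = u * a & e * u = u * e]].

Definition strongly_pi_star_regular (R : pzRingType) (star : R -> R) : Prop :=
  forall a : R, strongly_pi_star_regular_elt star a.

Definition same_right_ideal (R : pzRingType) (x y : R) : Prop :=
  forall z, (exists r, z = x * r) <-> (exists r, z = y * r).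

Definition nilpotent_elt (R : pzRingType) (x : R) : Prop :=
  exists k : nat, x ^+ k = 0.

(* Main.v *)
Require Import Defs.
From mathcomp Require Import all_boot all_algebra.
Set Implicit Arguments. Unset Strict Implicit. Unset Printing Implicit Defensive.
Import GRing.Theory.
Local Open Scope ring_scope.

Lemma star0 (R : pzRingType) (star : R -> R) : is_star_ring star -> star 0 = 0.
Proof. case=> Ha _ _; apply: (@addrI _ (star 0)); by rewrite -Ha !addr0. Qed.

Lemma starN (R : pzRingType) (star : R -> R) : is_star_ring star -> forall x, star (- x) = - star x.
Proof. move=> Hs x; have [Ha _ _] := Hs; apply: (@addrI _ (star x)); by rewrite -Ha !subrr star0. Qed.

Lemma starB (R : pzRingType) (star : R -> R) : is_star_ring star -> forall x y, star (x - y) = star x - star y.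
Proof. move=> Hs x y; have [Ha _ _] := Hs; by rewrite Ha starN. Qed.

Lemma star1 (R : pzRingType) (star : R -> R) : is_star_ring star -> star 1 = 1.
Proof. case=> _ Hm Hi; have h := Hm (star 1) 1; rewrite mulr1 Hi mulr1 in h; by rewrite -h. Qed.

Lemma idem_compl (R : pzRingType) (e : R) : e * e = e -> (1 - e) * (1 - e) = 1 - e.
Proof. move=> He; by rewrite mulrBr mulr1 mulrBl mul1r He subrr subr0. Qed.

Lemma idem_ort1 (R : pzRingType) (e : R) : e * e = e -> e * (1 - e) = 0.
Proof. move=> He; by rewrite mulrBr mulr1 He subrr. Qed.

Lemma idem_ort2 (R : pzRingType) (e : R) : e * e = e -> (1 - e) * e = 0.
Proof. move=> He; by rewrite mulrBl mul1r He subrr. Qed.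

Lemma proj_compl (R : pzRingType) (star : R -> R) : is_star_ring star ->
  forall p, projection star p -> projection star (1 - p).
Proof. move=> Hs p [Hp Hps]; split; first exact: idem_compl.
by rewrite starB // star1 // Hps. Qed.

Lemma central_compl (R : pzRingType) (e : R) : (forall y, e * y = y * e) ->
  forall y, (1 - e) * y = y * (1 - e).
Proof. move=> He y; by rewrite mulrBl mulrBr mul1r mulr1 He. Qed.

Lemma corner_central (R : pzRingType) (star : R -> R) : is_star_ring star ->
  forall q, projection star q ->
  (forall x, star (q + q * x * (1 - q)) = q + q * x * (1 - q)) -> forall x, q * x = x * q.
Proof.
move=> Hs q [Hq Hqs] h.
have [Ha Hm Hi] := Hs.
have E x : star (q * x * (1 - q)) = (1 - q) * (star x * q).
  by rewrite Hm Hm starB // star1 // Hqs.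
have H0 x : q * x * (1 - q) = 0.
  have := h x; rewrite Ha Hqs E => /addrI h1.
  have := congr1 (fun z => q * z) h1 => /=; rewrite (mulrA q (1 - q)) idem_ort1 // mul0r.  
  by rewrite !mulrA Hq => ->.
have H1 x : (1 - q) * (x * q) = 0.
  by have := congr1 star (H0 (star x)); rewrite E Hi star0.
move=> x.
have a1 : q * x = q * x * q.
  by apply: subr0_eq; rewrite -{1}(mulr1 (q * x)) -mulrBr H0.
have a2 : x * q = q * x * q.
  by apply: subr0_eq; rewrite -{1}(mul1r (x * q)) -mulrA -mulrBl H1.
by rewrite a1 a2.
Qed.

Lemma idem_pow (R : pzRingType) (e : R) : e * e = e -> forall n, e ^+ n.+1 = e.
Proof. move=> He; elim=> [|n IH]; first by rewrite expr1. by rewrite exprS IH He. Qed.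

Lemma central_pow (R : pzRingType) (g x : R) : (forall y, g * y = y * g) -> g * g = g ->
  forall n, (x * g) ^+ n.+1 = x ^+ n.+1 * g.
Proof. move=> Hc Hg n; rewrite exprMn_comm ?(idem_pow Hg) // /GRing.comm Hc. Qed.

Lemma unit_lr (R : pzRingType) (x l r : R) : l * x = 1 -> x * r = 1 -> is_unit x.
Proof.
move=> hl hr; exists r; split => //.
have -> : r = l by rewrite -[l]mulr1 -hr mulrA hl mul1r.
done.
Qed.

Lemma SA_abelian (R : pzRingType) (star : R -> R) : is_star_ring star ->
  (forall e : R, idempotent_elt e -> projection star e) -> abelian_ring R.
Proof.
move=> Hs SA e He x; apply: (corner_central Hs (SA e He)) => y.
have Ne : e * y * (1 - e) * e = 0 by rewrite -mulrA idem_ort2 // mulr0.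
have eN : e * (e * y * (1 - e)) = e * y * (1 - e) by rewrite !mulrA He.
have NN : e * y * (1 - e) * (e * y * (1 - e)) = 0 by rewrite !mulrA Ne !mul0r.
apply: (SA _ _).2; rewrite /idempotent_elt.
move: Ne eN NN; set N := e * y * (1 - e) => Ne eN NN.
by rewrite mulrDl !mulrDr He eN Ne NN !addr0.
Qed.

Lemma key (R : pzRingType) (ab : abelian_ring R) (c b : R) : c = c * b * c ->
  [/\ c * b * (c * b) = c * b, b * c = c * b, c * b * c = c & c * (c * b) = c].
Proof.
move=> Hc.
have He : c * b * (c * b) = c * b by rewrite mulrA -Hc.
have ecc : c * b * c = c by rewrite -Hc.
have cec : c * (c * b) = c by rewrite -(ab _ He) ecc.
split => //.
have Hg : b * c * (b * c) = b * c by rewrite mulrA -(mulrA b c b) -(mulrA b (c * b) c) -Hc.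
have cg : c * (b * c) = c by rewrite mulrA -Hc.
have g1 : b * c = c * b * (b * c).
  by rewrite -{1}ecc mulrA -(ab _ He b) -(mulrA (c * b) b c).
have g2 : c * b = b * c * (c * b).
  by rewrite -{1}cg -(ab _ Hg c) -(mulrA (b * c) c b).
by rewrite g1 {2}g2 (ab _ Hg).
Qed.

Lemma unit_corner (R : pzRingType) (ab : abelian_ring R) (c b : R) : c = c * b * c ->
  is_unit (c + (1 - c * b)) /\ c * b * (c + (1 - c * b)) = c.
Proof.
move=> Hc; have [He bc ecc cec] := key ab Hc.
have Hce := ab _ He.
move: He bc ecc cec Hce; set e := c * b => He bc ecc cec Hce.
have f1 : c * (e * b) = e by rewrite mulrA cec.
have f2 : c * (1 - e) = 0 by rewrite mulrBr mulr1 cec subrr.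
have f3 : (1 - e) * (e * b) = 0 by rewrite mulrA idem_ort2 // mul0r.
have f4 := idem_compl He.
have f5 : e * b * c = e by rewrite -mulrA bc He.
have f6 : e * b * (1 - e) = 0 by rewrite Hce -mulrA idem_ort1 // mulr0.
have f7 : (1 - e) * c = 0 by rewrite mulrBl mul1r ecc subrr.
have f8 : e * (1 - e) = 0 by rewrite idem_ort1.
clearbody e; move: f1 f2 f3 f4 f5 f6 f7 f8; set f := 1 - e => f1 f2 f3 f4 f5 f6 f7 f8.
have ef : e + f = 1 by rewrite /f addrC subrK.
clearbody f.
split; last by rewrite mulrDr ecc f8 addr0.
exists (e * b + f); split.
  by rewrite mulrDl !mulrDr f1 f2 f3 f4 addr0 add0r.
by rewrite mulrDl !mulrDr f5 f6 f7 f4 addr0 add0r.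
Qed.

Definition C2 (R : pzRingType) (star : R -> R) :=
  pi_regular R /\ (forall e : R, idempotent_elt e -> projection star e).

Lemma H12 (R : pzRingType) (star : R -> R) : strongly_pi_star_regular star -> C2 star.
Proof.
move=> H1; split.
  move=> a; have [e [u [m [Hm [He _] [v [uv vu]] Ham [_ _ _]]]]] := H1 a.
  exists m; split => //; exists v; rewrite Ham.
  by rewrite -(mulrA e u v) uv mulr1 mulrA He.
move=> f Hf; have [e [u [m [Hm Pe [v [uv vu]] Hfm [_ _ eu]]]]] := H1 f.
case: m Hm Hfm => // m _; rewrite (idem_pow Hf) => Hfm.
have h : e * u * u = e * u.
  have := Hf; rewrite /idempotent_elt Hfm.
  by rewrite mulrA -(mulrA e u e) -eu mulrA Pe.1.
have h2 : e * u = e.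
  by have := congr1 (fun z => z * v) h => /=; rewrite -!mulrA uv !mulr1.
by rewrite Hfm h2.
Qed.

Lemma H21 (R : pzRingType) (star : R -> R) : is_star_ring star -> C2 star -> strongly_pi_star_regular star.
Proof.
move=> Hs [Hpi SA] a; have ab := SA_abelian Hs SA.
have [n [Hn [b Hc]]] := Hpi a.
have [He bc ecc cec] := key ab Hc.
have [Hu eu] := unit_corner ab Hc.
exists (a ^+ n * b), (a ^+ n + (1 - a ^+ n * b)), n; split => //.
- exact: SA He.
have ca : a * a ^+ n = a ^+ n * a by apply: commrX.
split.
- exact: (esym (ab _ He a)).
- by rewrite mulrDr mulrDl mulrBr mulrBl mulr1 mul1r ca (ab _ He a).
- exact: ab.
Qed.

Lemma H23 (R : pzRingType) (star : R -> R) : is_star_ring star -> C2 star ->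
  (forall a : R, exists n : nat, exists p : R,
                [/\ (1 <= n)%N, projection star p & same_right_ideal (a ^+ n) p])
             /\ abelian_ring R.
Proof.
move=> Hs [Hpi SA]; have ab := SA_abelian Hs SA; split => // a.
have [n [Hn [b Hc]]] := Hpi a.
have [He bc ecc cec] := key ab Hc.
exists n, (a ^+ n * b); split => //; first exact: SA.
move=> z; split; case=> r ->.
  by exists (a ^+ n * r); rewrite mulrA ecc.
by exists (b * r); rewrite mulrA.
Qed.

Lemma H34 (R : pzRingType) (star : R -> R) :
  (forall a : R, exists n : nat, exists p : R,
                [/\ (1 <= n)%N, projection star p & same_right_ideal (a ^+ n) p])
             /\ abelian_ring R ->
  (forall a : R, exists n : nat, (1 <= n)%N /\ strongly_star_regular star (a ^+ n)).
Proof.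
move=> [H3 ab] a; have [n [p [Hn Pp Hid]]] := H3 a.
exists n; split => //.
move: Hid; set c := a ^+ n => Hid.
have [x cx] : exists x, c = p * x by apply/(Hid c).1; exists 1; rewrite mulr1.
have [y py] : exists y, p = c * y by apply/(Hid p).2; exists 1; rewrite mulr1.
have pc : p * c = c by rewrite {2}cx cx mulrA Pp.1.
have Hc : c = c * y * c by rewrite -py pc.
have [Hu eu] := unit_corner ab Hc.
rewrite -py in Hu eu.
exists p, (c + (1 - p)); split => //.
by rewrite -(ab _ Pp.1).
Qed.

Lemma H42 (R : pzRingType) (star : R -> R) :
  (forall a : R, exists n : nat, (1 <= n)%N /\ strongly_star_regular star (a ^+ n)) -> C2 star.
Proof.
move=> H4; split.
  move=> a; have [n [Hn [p [u [Pp [v [uv vu]] h1 h2]]]]] := H4 a.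
  exists n; split => //; exists v.
  have -> : a ^+ n * v * a ^+ n = p * a ^+ n.
    by rewrite {1}h1 -(mulrA p u v) uv mulr1.
  by rewrite [in RHS]h1 mulrA Pp.1 -h1.
move=> f Hf; have [n [Hn [p [u [Pp [v [uv vu]] h1 h2]]]]] := H4 f.
case: n Hn h1 h2 => // n _; rewrite (idem_pow Hf) => h1 h2.
have h3 : f = u * f.
  by rewrite -{1}Hf {1}h2 {1}h1 -mulrA (mulrA p p u) Pp.1 -h1.
have -> : f = p.
  have := congr1 (fun z => v * z) (etrans (esym h3) h2) => /=.
  by rewrite !mulrA vu !mul1r.
exact: Pp.
Qed.

Definition C5 (R : pzRingType) (star : R -> R) :=
  (forall a : R, exists p u : R,
                [/\ projection star p, is_unit u, a = p + u & nilpotent_elt (a * p)])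
             /\ (forall v vinv q : R, v * vinv = 1 -> vinv * v = 1 ->
                   projection star q -> projection star (vinv * q * v)).

Lemma H25 (R : pzRingType) (star : R -> R) : is_star_ring star -> C2 star -> C5 star.
Proof.
move=> Hs [Hpi SA]; have ab := SA_abelian Hs SA; split; last first.
  move=> v vinv q h1 h2 [Hq _]; apply: SA.
  rewrite /idempotent_elt -!mulrA (mulrA v vinv) h1 mul1r.
  by rewrite (mulrA q q) Hq.
move=> a; have [[|k] [Hn [b Hc]]] := Hpi a => //.
have [He bc ecc cec] := key ab Hc.
have Hce := ab _ He.
have S0 : a * (\sum_(i < k.+1) a ^+ i) = (\sum_(i < k.+1) a ^+ i) * a.
  by apply: commr_sum => i _; apply: commrX.
have Sa : (a - 1) * (\sum_(i < k.+1) a ^+ i) = a ^+ k.+1 - 1 by rewrite -subrX1.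
have Sa' : (\sum_(i < k.+1) a ^+ i) * (a - 1) = a ^+ k.+1 - 1.
  by rewrite -Sa mulrBl mulrBr mulr1 mul1r S0.
have ca : a * a ^+ k = a ^+ k.+1 by rewrite exprS.
have ac : a ^+ k * a = a ^+ k.+1 by rewrite exprSr.
move: Hc He bc ecc cec Hce S0 Sa Sa' ca ac.
set S := \sum_(i < k.+1) a ^+ i; set c := a ^+ k.+1; set e := c * b.
move=> Hc He bc ecc cec Hce S0 Sa Sa' ca ac.
have Pe := SA e He.
have Pp := proj_compl Hs Pe.
have Hpc := central_compl Hce.
have pc : (1 - e) * c = 0 by rewrite mulrBl mul1r ecc subrr.
have cp : c * (1 - e) = 0 by rewrite mulrBr mulr1 cec subrr.
have pe := idem_ort2 He.
have ep := idem_ort1 He.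
have pp := idem_compl He.
have ef : e + (1 - e) = 1 by rewrite addrC subrK.
move: Pp Hpc pc cp pe ep pp ef; set p := 1 - e => Pp Hpc pc cp pe ep pp ef.
clearbody p.
exists p, (a - p); split => //.
  have ue : (a - p) * e = a * e by rewrite mulrBl pe subr0.
  have up : (a - p) * p = p * (a - 1) by rewrite mulrBl pp mulrBr mulr1 Hpc.
  apply: (unit_lr (l := b * a ^+ k * e - S * p) (r := e * (a ^+ k * b) - p * S)).
    rewrite mulrBl -(mulrA (b * a ^+ k) e) Hce ue mulrA -(mulrA b (a ^+ k) a) ac bc He.
    rewrite -(mulrA S p) Hpc up mulrA -Hpc -mulrA Sa' mulrBr mulr1 pc.
    by rewrite sub0r opprK.
  rewrite mulrBr (mulrA (a - p) e) ue (mulrA (a - p) p) up.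
  rewrite -(Hce a) -(mulrA e a) (mulrA a (a ^+ k) b) ca He.
  by rewrite -mulrA Sa mulrBr mulr1 pc sub0r opprK.
- by rewrite [p + _]addrC subrK.
- exists k.+1; rewrite central_pow //.
Qed.

Lemma H52 (R : pzRingType) (star : R -> R) : is_star_ring star -> C5 star -> C2 star.
Proof.
move=> Hs [H5a H5b].
have Pc q : projection star q -> forall x, q * x = x * q.
  move=> Pq; apply: (corner_central Hs Pq) => x.
  have Nq : q * x * (1 - q) * q = 0 by rewrite -mulrA idem_ort2 ?Pq.1 // mulr0.
  have qN : q * (q * x * (1 - q)) = q * x * (1 - q) by rewrite !mulrA Pq.1.
  have NN : q * x * (1 - q) * (q * x * (1 - q)) = 0 by rewrite !mulrA Nq !mul0r.
  move: Nq qN NN; set N := q * x * (1 - q) => Nq qN NN; clearbody N.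
  have h1 : (1 + N) * (1 - N) = 1 by rewrite mulrDl mul1r mulrBr mulr1 NN subr0 subrK.
  have h2 : (1 - N) * (1 + N) = 1 by rewrite mulrBl mul1r mulrDr mulr1 NN addr0 addrK.
  have := H5b _ _ q h1 h2 Pq.
  have -> : (1 - N) * q * (1 + N) = q + N.
    by rewrite mulrBl mul1r Nq subr0 mulrDr mulr1 qN.
  by case.
split; last first.
  move=> f Hf; have [p [u [Pp [v [uv vu]] Hfpu [k Hk]]]] := H5a f.
  have Hpc := Pc p Pp.
  have fp0 : f * p = 0.
    have idem : (f * p) * (f * p) = f * p.
      by rewrite -mulrA (mulrA p f p) (Hpc f) -(mulrA f p p) Pp.1 mulrA Hf.
    case: k Hk => [|k] Hk.
      by rewrite expr0 in Hk; rewrite -[f * p]mulr1 Hk mulr0.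
    by rewrite -(idem_pow idem k) Hk.
  have uq : u * (1 - p) = f.
    have -> : u = f - p by rewrite Hfpu [p + u]addrC addrK.
    by rewrite mulrBl idem_ort1 ?Pp.1 // subr0 mulrBr mulr1 fp0 subr0.
  have Hqc := central_compl Hpc.
  have fw : f * (v * (1 - p)) = 1 - p.
    rewrite -{1}uq -mulrA (mulrA (1 - p) v) (Hqc v) -(mulrA v) (idem_compl Pp.1).
    by rewrite mulrA uv mul1r.
  have ff : f * (1 - p) = f by rewrite mulrBr mulr1 fp0 subr0.
  have -> : f = 1 - p by rewrite -{1}ff -{1}fw mulrA Hf fw.
  exact (proj_compl Hs Pp).
move=> a; have [p [u [Pp [v [uv vu]] Ha [k Hk]]]] := H5a a.
have Hpc := Pc p Pp; have Hqc := central_compl Hpc.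
have Pq := idem_compl Pp.1.
exists k.+1; split => //; exists (v ^+ k.+1).
have aq : a * (1 - p) = u * (1 - p) by rewrite {1}Ha mulrDl idem_ort1 ?Pp.1 // add0r.
have an : a ^+ k.+1 = u ^+ k.+1 * (1 - p).
  have e1 : a ^+ k.+1 = a ^+ k.+1 * p + a ^+ k.+1 * (1 - p).
    by rewrite -mulrDr [p + _]addrC subrK mulr1.
  rewrite e1 -(central_pow _ Hpc Pp.1) exprSr Hk mul0r add0r.
  by rewrite -(central_pow _ Hqc Pq) aq (central_pow _ Hqc Pq).
have uv1 : u ^+ k.+1 * v ^+ k.+1 = 1.
  by rewrite -exprMn_comm ?uv ?expr1n // /GRing.comm uv vu.
rewrite an -(mulrA (u ^+ k.+1) (1 - p)) (Hqc (v ^+ k.+1)) (mulrA (u ^+ k.+1) (v ^+ k.+1)) uv1 mul1r.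
by rewrite (mulrA (1 - p)) (Hqc (u ^+ k.+1)) -mulrA Pq.
Qed.

Theorem theorem3p6 (R : pzRingType) (star : R -> R) (Hstar : is_star_ring star) :
  [<->
   (* (1) *) strongly_pi_star_regular star;
   (* (2) *) pi_regular R /\ (forall e : R, idempotent_elt e -> projection star e);
   (* (3) *) (forall a : R, exists n : nat, exists p : R,
                [/\ (1 <= n)%N, projection star p & same_right_ideal (a ^+ n) p])
             /\ abelian_ring R;
   (* (4) *) (forall a : R, exists n : nat, (1 <= n)%N /\ strongly_star_regular star (a ^+ n));
   (* (5) *) (forall a : R, exists p u : R,
                [/\ projection star p, is_unit u, a = p + u & nilpotent_elt (a * p)])
             /\ (forall v vinv q : R, v * vinv = 1 -> vinv * v = 1 ->
                   projection star q -> projection star (vinv * q * v))].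
Proof.
tfae.
- move=> h; exact: (H12 h).
- move=> h; exact: (H23 Hstar h).
- move=> h; exact: (H34 h).
- move=> h; exact: (H25 Hstar (H42 h)).
- move=> h; exact: (H21 Hstar (H52 Hstar h)).
Qed.
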